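(* For every $l\in\mathbb{N}$ and every $a_1,\dots,a_l\in\mathbb{Q}^*$ there exists $d\in\mathbb{Q}^*$ such that $F_d(\mathbb{Q})\not\subseteq\Omega_d$ and $da_j\notin(\mathbb{Q}^* )^2$ for all $j=1,\dots,l$.
   Context: For $d\in\mathbb{Q}^*$, $F_d\subset\mathbb{P}^3_{\mathbb{Q}}$ is the surface $x^4+d^2y^4-d^2z^4-w^4=0$, and $\Omega_d=\{[x:y:z:w]: xyzw=0\}\cup L_d$, where $L_d$ is the union of the $48$ lines (over $\overline{\mathbb{Q}}$) contained in $F_d$. *)

(* Defs.v *)
From HB Require Import structures.
From mathcomp Require Import all_boot all_order all_algebra all_field.
Set Implicit Arguments. Unset Strict Implicit. Unset Printing Implicit Defensive.
Import Order.TTheory GRing.Theory Num.Theory.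
Local Open Scope ring_scope.

(* Homogeneous coordinates [x:y:z:w] are row vectors of length 4. *)
Definition c0 : 'I_4 := @Ordinal 4 0 isT.
Definition c1 : 'I_4 := @Ordinal 4 1 isT.
Definition c2 : 'I_4 := @Ordinal 4 2 isT.
Definition c3 : 'I_4 := @Ordinal 4 3 isT.

Definition Fform (R : comRingType) (d : R) (v : 'rV[R]_4) : R :=
  v 0 c0 ^+ 4 + d ^+ 2 * v 0 c1 ^+ 4 - d ^+ 2 * v 0 c2 ^+ 4 - v 0 c3 ^+ 4.

(* Rational points of F_d, given by nonzero representatives. *)
Definition on_Fd_rat (d : rat) (v : 'rV[rat]_4) : Prop :=
  v != 0 /\ Fform d v = 0.

(* A projective line of P^3 over Qbar (= algC) is spanned by two linearly
   independent vectors u, v; it is contained in F_d iff the form vanishes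
   on every point s u + t v. *)
Definition line_in_Fd (d : rat) (u v : 'rV[algC]_4) : Prop :=
  (forall a b : algC, a *: u + b *: v = 0 -> a = 0 /\ b = 0) /\
  (forall s t : algC, Fform (ratr d) (s *: u + t *: v) = 0).

Definition in_Ld (d : rat) (p : 'rV[rat]_4) : Prop :=
  exists u v : 'rV[algC]_4, line_in_Fd d u v /\
    exists s t : algC, map_mx ratr p = s *: u + t *: v.

Definition in_Omega (d : rat) (p : 'rV[rat]_4) : Prop :=
  p 0 c0 * p 0 c1 * p 0 c2 * p 0 c3 = 0 \/ in_Ld d p.

(* Main.v *)
Require Import Defs.
From HB Require Import structures.
From mathcomp Require Import all_boot all_order all_algebra all_field.
From mathcomp Require Import ring lra zify.
Import Order.TTheory GRing.Theory Num.Theory.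
Local Open Scope ring_scope.

Lemma mul4_neq0 (K : fieldType) (s x y z : K) :
  s != 0 -> x != 0 -> y != 0 -> z != 0 -> s * (x * y * z) != 0.
Proof. by move=> *; rewrite !mulf_neq0. Qed.
Arguments mul4_neq0 {K s x y z}.

Lemma vand (K : fieldType) (a0 a1 a2 a3 u0 u1 u2 u3 : K) :
  a0 != 0 -> a1 != 0 -> a2 != 0 -> a3 != 0 ->
  a0 + a1 != 0 -> a0 + a2 != 0 -> a0 + a3 != 0 ->
  a0 + a1 + a2 + a3 = 0 ->
  a0 * u0 + a1 * u1 + a2 * u2 + a3 * u3 = 0 ->
  a0 * u0 ^+ 2 + a1 * u1 ^+ 2 + a2 * u2 ^+ 2 + a3 * u3 ^+ 2 = 0 ->
  a0 * u0 ^+ 3 + a1 * u1 ^+ 3 + a2 * u2 ^+ 3 + a3 * u3 ^+ 3 = 0 ->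
  [/\ u1 = u0, u2 = u0 & u3 = u0].
Proof.
move=> h0 h1 h2 h3 h01 h02 h03 S0 S1 S2 S3.
have L : forall r1 r2 r3, a0 * ((u0 - r1) * (u0 - r2) * (u0 - r3))
   + a1 * ((u1 - r1) * (u1 - r2) * (u1 - r3))
   + a2 * ((u2 - r1) * (u2 - r2) * (u2 - r3))
   + a3 * ((u3 - r1) * (u3 - r2) * (u3 - r3)) = 0.
  move=> r1 r2 r3.
  transitivity ((a0 * u0 ^+ 3 + a1 * u1 ^+ 3 + a2 * u2 ^+ 3 + a3 * u3 ^+ 3)
    - (r1 + r2 + r3) * (a0 * u0 ^+ 2 + a1 * u1 ^+ 2 + a2 * u2 ^+ 2 + a3 * u3 ^+ 2)
    + (r1 * r2 + r1 * r3 + r2 * r3) * (a0 * u0 + a1 * u1 + a2 * u2 + a3 * u3)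
    - r1 * r2 * r3 * (a0 + a1 + a2 + a3)); first by ring.
  by rewrite S0 S1 S2 S3; ring.
have n1 : a0 + a2 + a3 != 0.
  have -> : a0 + a2 + a3 = - a1 by apply/eqP; rewrite -subr_eq0 opprK -S0; apply/eqP; ring.
  by rewrite oppr_eq0.
have n2 : a0 + a1 + a3 != 0.
  have -> : a0 + a1 + a3 = - a2 by apply/eqP; rewrite -subr_eq0 opprK -S0; apply/eqP; ring.
  by rewrite oppr_eq0.
have n3 : a0 + a1 + a2 != 0.
  have -> : a0 + a1 + a2 = - a3 by apply/eqP; rewrite -subr_eq0 opprK -S0; apply/eqP; ring.
  by rewrite oppr_eq0.
have df : forall x, x != u0 -> u0 - x != 0.
  by move=> x hx; rewrite subr_eq0 eq_sym.
case: (eqVneq u1 u0) => e1; case: (eqVneq u2 u0) => e2; case: (eqVneq u3 u0) => e3.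
- by [].
- have := L u3 u3 u3; rewrite e1 e2 => H; exfalso.
  have := mul4_neq0 n3 (df _ e3) (df _ e3) (df _ e3).
  by rewrite -H; apply/negP; rewrite negbK; apply/eqP; ring.
- have := L u2 u2 u2; rewrite e1 e3 => H; exfalso.
  have := mul4_neq0 n2 (df _ e2) (df _ e2) (df _ e2).
  by rewrite -H; apply/negP; rewrite negbK; apply/eqP; ring.
- have := L u2 u3 u3; rewrite e1 => H; exfalso.
  have := mul4_neq0 h01 (df _ e2) (df _ e3) (df _ e3).
  by rewrite -H; apply/negP; rewrite negbK; apply/eqP; ring.
- have := L u1 u1 u1; rewrite e2 e3 => H; exfalso.
  have := mul4_neq0 n1 (df _ e1) (df _ e1) (df _ e1).
  by rewrite -H; apply/negP; rewrite negbK; apply/eqP; ring.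
- have := L u1 u3 u3; rewrite e2 => H; exfalso.
  have := mul4_neq0 h02 (df _ e1) (df _ e3) (df _ e3).
  by rewrite -H; apply/negP; rewrite negbK; apply/eqP; ring.
- have := L u1 u2 u2; rewrite e3 => H; exfalso.
  have := mul4_neq0 h03 (df _ e1) (df _ e2) (df _ e2).
  by rewrite -H; apply/negP; rewrite negbK; apply/eqP; ring.
- have := L u1 u2 u3 => H; exfalso.
  have := mul4_neq0 h0 (df _ e1) (df _ e2) (df _ e3).
  by rewrite -H; apply/negP; rewrite negbK; apply/eqP; ring.
Qed.

Lemma nat_neq0 (n : nat) : (n.+1%:R : algC) != 0.
Proof. by rewrite pnatr_eq0. Qed.

Lemma no_line (dd : algC) (P W : 'rV[algC]_4) :
  (forall a b, Fform dd (a *: P + b *: W) = 0) ->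
  (forall a b, a *: P + b *: W = 0 -> a = 0 /\ b = 0) ->
  P 0 c0 != 0 -> P 0 c1 != 0 -> P 0 c2 != 0 -> P 0 c3 != 0 -> dd != 0 ->
  P 0 c0 ^+ 4 + dd ^+ 2 * P 0 c1 ^+ 4 != 0 ->
  P 0 c0 ^+ 4 - dd ^+ 2 * P 0 c2 ^+ 4 != 0 ->
  P 0 c0 ^+ 4 - P 0 c3 ^+ 4 != 0 -> False.
Proof.
move=> HF Hind hp0 hp1 hp2 hp3 hd h01 h02 h03.
set p0 := P 0 c0 in hp0 h01 h02 h03 *.
set p1 := P 0 c1 in hp1 h01 *.
set p2 := P 0 c2 in hp2 h02 *.
set p3 := P 0 c3 in hp3 h03 *.
set w0 := W 0 c0; set w1 := W 0 c1; set w2 := W 0 c2; set w3 := W 0 c3.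
pose G := fun b : algC => (p0 + b * w0) ^+ 4 + dd ^+ 2 * (p1 + b * w1) ^+ 4
   - dd ^+ 2 * (p2 + b * w2) ^+ 4 - (p3 + b * w3) ^+ 4.
have hG : forall b, G b = 0.
  by move=> b; have := HF 1 b; rewrite /Fform !mxE !mul1r.
have S0 : p0 ^+ 4 + dd ^+ 2 * p1 ^+ 4 - dd ^+ 2 * p2 ^+ 4 - p3 ^+ 4 = 0.
  by have := hG 0; rewrite /G !mul0r !addr0.
have S1 : p0 ^+ 3 * w0 + dd ^+ 2 * (p1 ^+ 3 * w1) - dd ^+ 2 * (p2 ^+ 3 * w2) - p3 ^+ 3 * w3 = 0.
  have h : 48%:R * (p0 ^+ 3 * w0 + dd ^+ 2 * (p1 ^+ 3 * w1) - dd ^+ 2 * (p2 ^+ 3 * w2) - p3 ^+ 3 * w3)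
     = 8%:R * (G 1 - G (-1)) - (G 2%:R - G (- 2%:R)) by rewrite /G; ring.
  rewrite !hG subrr mulr0 subr0 in h.
  by move/eqP: h; rewrite mulf_eq0 (negPf (nat_neq0 47)) => /eqP.
have S3 : p0 * w0 ^+ 3 + dd ^+ 2 * (p1 * w1 ^+ 3) - dd ^+ 2 * (p2 * w2 ^+ 3) - p3 * w3 ^+ 3 = 0.
  have h : 48%:R * (p0 * w0 ^+ 3 + dd ^+ 2 * (p1 * w1 ^+ 3) - dd ^+ 2 * (p2 * w2 ^+ 3) - p3 * w3 ^+ 3)
     = (G 2%:R - G (- 2%:R)) - 2%:R * (G 1 - G (-1)) by rewrite /G; ring.
  rewrite !hG subrr mulr0 subr0 in h.
  by move/eqP: h; rewrite mulf_eq0 (negPf (nat_neq0 47)) => /eqP.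
have S2 : p0 ^+ 2 * w0 ^+ 2 + dd ^+ 2 * (p1 ^+ 2 * w1 ^+ 2) - dd ^+ 2 * (p2 ^+ 2 * w2 ^+ 2) - p3 ^+ 2 * w3 ^+ 2 = 0.
  have h : 144%:R * (p0 ^+ 2 * w0 ^+ 2 + dd ^+ 2 * (p1 ^+ 2 * w1 ^+ 2) - dd ^+ 2 * (p2 ^+ 2 * w2 ^+ 2) - p3 ^+ 2 * w3 ^+ 2)
     = 16%:R * (G 1 + G (-1) - 2%:R * G 0) - (G 2%:R + G (- 2%:R) - 2%:R * G 0) by rewrite /G; ring.
  rewrite !hG !mulr0 !addr0 subrr mulr0 subr0 in h.
  by move/eqP: h; rewrite mulf_eq0 (negPf (nat_neq0 143)) => /eqP.
pose u0 := w0 / p0; pose u1 := w1 / p1; pose u2 := w2 / p2; pose u3 := w3 / p3.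
have ew0 : w0 = u0 * p0 by rewrite /u0 divfK.
have ew1 : w1 = u1 * p1 by rewrite /u1 divfK.
have ew2 : w2 = u2 * p2 by rewrite /u2 divfK.
have ew3 : w3 = u3 * p3 by rewrite /u3 divfK.
rewrite ew0 ew1 ew2 ew3 in S1 S2 S3.
have := @vand _ (p0 ^+ 4) (dd ^+ 2 * p1 ^+ 4) (- (dd ^+ 2 * p2 ^+ 4)) (- p3 ^+ 4) u0 u1 u2 u3.
case.
- by rewrite expf_neq0.
- by rewrite mulf_neq0 ?expf_neq0.
- by rewrite oppr_eq0 mulf_neq0 ?expf_neq0.
- by rewrite oppr_eq0 expf_neq0.
- by [].
- by [].
- by [].
- by rewrite -S0; ring.
- by rewrite -S1; ring.
- by rewrite -S2; ring.
- by rewrite -S3; ring.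
move=> e1 e2 e3.
have := Hind (- u0) 1.
case.
  apply/rowP => i; rewrite !mxE.
  case: i => [[|[|[|[|k]]]] Hi] //=.
  - have -> : Ordinal Hi = c0 by apply/val_inj.
    by rewrite -/p0 -/w0 ew0; ring.
  - have -> : Ordinal Hi = c1 by apply/val_inj.
    by rewrite -/p1 -/w1 ew1 e1; ring.
  - have -> : Ordinal Hi = c2 by apply/val_inj.
    by rewrite -/p2 -/w2 ew2 e2; ring.
  - have -> : Ordinal Hi = c3 by apply/val_inj.
    by rewrite -/p3 -/w3 ew3 e3; ring.
move=> _ /eqP; by rewrite oner_eq0.
Qed.
Local Close Scope ring_scope.
Lemma nat_part (p A m n B : nat) : prime p -> 4 < p -> 0 < A < p -> 0 < B < p ->
  coprime n m -> p * (4 * (p ^ 4 + 1)) * A * m ^ 2 = n ^ 2 * B -> False.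
Proof.
move=> pp p4 /andP[A0 Ap] /andP[B0 Bp] cop E.
have pnB : ~~ (p %| B) by apply/negP => /(dvdn_leq B0); rewrite leqNgt Bp.
have pnA : ~~ (p %| A) by apply/negP => /(dvdn_leq A0); rewrite leqNgt Ap.
have pn : p %| n.
  have : p %| n ^ 2 * B by rewrite -E -!mulnA dvdn_mulr.
  idtac.
  by rewrite Euclid_dvdM // (negPf pnB) orbF Euclid_dvdX // => /andP[].
case/dvdnP: pn => k ek.
have p0 : 0 < p by apply: prime_gt0.
have E2 : 4 * (p ^ 4 + 1) * A * m ^ 2 = p * (k ^ 2 * B).
  apply/eqP; rewrite -(eqn_pmul2l p0); apply/eqP.
  transitivity (p * (4 * (p ^ 4 + 1)) * A * m ^ 2); first by ring.
  by rewrite E ek; ring.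
have pm : p %| m.
  have : p %| 4 * (p ^ 4 + 1) * A * m ^ 2 by rewrite E2 dvdn_mulr.
  rewrite !Euclid_dvdM // => /orP[/orP[/orP[h|h]|h]|/orP[h|h]] //.
  - by move: (dvdn_leq (isT : 0 < 4) h); rewrite leqNgt p4.
  - move: h; have -> : p ^ 4 + 1 = p * p ^ 3 + 1 by rewrite -expnS.
    rewrite dvdn_addr ?dvdn_mulr // dvdn1 => /eqP p1.
    by move: p4; rewrite p1.
  - by move: h; rewrite (negPf pnA).
have : p %| gcdn n m by rewrite dvdn_gcd pm ek dvdn_mull.
rewrite (eqP cop) dvdn1 => /eqP p1.
by move: p4; rewrite p1.
Qed.
Local Open Scope ring_scope.


Lemma ineqs (P : rat) : 5%:R <= P ->
  let d := 4%:R * P * (P ^+ 4 + 1) in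
  [/\ 0 < d, 0 < P ^+ 4 - 2%:R * P ^+ 2 - 1, 0 < P ^+ 4 + 2%:R * P ^+ 2 - 1
   & P ^+ 2 * d < (P ^+ 4 + 2%:R * P ^+ 2 - 1) ^+ 2].
Proof.
move=> P5 d.
have P0 : 0 < P by apply: lt_le_trans P5; rewrite ltr0n.
have Q : 25%:R <= P ^+ 2 by nra.
have Q4 : 25%:R * P ^+ 2 <= P ^+ 4 by nra.
split.
- rewrite /d; nra.
- nra.
- nra.
- rewrite /d. nra.
Qed.

Lemma row_ext (R : ringType) (A B : 'rV[R]_4) :
  A 0 c0 = B 0 c0 -> A 0 c1 = B 0 c1 -> A 0 c2 = B 0 c2 -> A 0 c3 = B 0 c3 -> A = B.
Proof.
move=> h0 h1 h2 h3; apply/rowP => i.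
case: i => [[|[|[|[|k]]]] Hi] //=.
- by have -> : Ordinal Hi = c0 by apply/val_inj.
- by have -> : Ordinal Hi = c1 by apply/val_inj.
- by have -> : Ordinal Hi = c2 by apply/val_inj.
- by have -> : Ordinal Hi = c3 by apply/val_inj.
Qed.

Theorem lemma5p5 (l : nat) (a : 'I_l -> rat) (ha : forall j, a j != 0) :
  exists d : rat, d != 0 /\
    (exists p : 'rV[rat]_4, on_Fd_rat d p /\ ~ in_Omega d p) /\
    (forall j : 'I_l, ~ (exists q : rat, d * a j = q ^+ 2)).
Proof.
pose M := (4 + \sum_(j < l) (`|numq (a j)| + `|denq (a j)|))%N.
have [p Mp pp] := prime_above M.
have p4 : (4 < p)%N by apply: leq_ltn_trans Mp; rewrite leq_addr.
have bnd : forall j, (`|numq (a j)| < p)%N /\ (`|denq (a j)| < p)%N.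
  move=> j; have : (`|numq (a j)| + `|denq (a j)| <= M)%N.
    by rewrite /M (bigD1 j) //= addnCA leq_addr.
  move=> h; split; [apply: leq_ltn_trans Mp | apply: leq_ltn_trans Mp];
    apply: leq_trans h; [exact: leq_addr | exact: leq_addl].
pose P : rat := p%:R.
have P5 : 5%:R <= P by rewrite ler_nat.
pose d := 4%:R * P * (P ^+ 4 + 1).
pose X := P * d.
pose Y := P ^+ 4 - 2%:R * P ^+ 2 - 1.
pose Z := P ^+ 4 + 2%:R * P ^+ 2 - 1.
pose W := d.
have [d0 Y0 Z0 key] : [/\ 0 < d, 0 < Y, 0 < Z & P ^+ 2 * d < Z ^+ 2] := @ineqs P P5.
have P0 : 0 < P by apply: lt_le_trans P5; rewrite ltr0n.
have X0 : X != 0 by rewrite mulf_neq0 // gt_eqF.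
pose pt : 'rV[rat]_4 := \row_(i < 4) nth 0 [:: X; Y; Z; W] i.
have pt0 : pt 0 c0 = X by rewrite mxE.
have pt1 : pt 0 c1 = Y by rewrite mxE.
have pt2 : pt 0 c2 = Z by rewrite mxE.
have pt3 : pt 0 c3 = W by rewrite mxE.
exists d; split; first by rewrite gt_eqF.
split.
  exists pt; split.
    split.
      by apply/eqP => h; move: X0; rewrite -pt0 h mxE eqxx.
    by rewrite /Fform pt0 pt1 pt2 pt3 /X /Y /Z /W /d; ring.
  case.
    by rewrite pt0 pt1 pt2 pt3; apply/eqP; rewrite (mulf_neq0 (mulf_neq0 (mulf_neq0 X0 (lt0r_neq0 Y0)) (lt0r_neq0 Z0)) (lt0r_neq0 d0)).
  case=> u [v [[ind Fl] [s [t E]]]].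
  pose PA : 'rV[algC]_4 := map_mx ratr pt.
  have PA0 : PA 0 c0 != 0 by rewrite mxE fmorph_eq0 pt0.
  have PA1 : PA 0 c1 != 0 by rewrite mxE fmorph_eq0 pt1 gt_eqF.
  have PA2 : PA 0 c2 != 0 by rewrite mxE fmorph_eq0 pt2 gt_eqF.
  have PA3 : PA 0 c3 != 0 by rewrite mxE fmorph_eq0 pt3 gt_eqF.
  have dA : (ratr d : algC) != 0 by rewrite fmorph_eq0 gt_eqF.
  have h01 : PA 0 c0 ^+ 4 + ratr d ^+ 2 * PA 0 c1 ^+ 4 != 0.
    rewrite ![PA _ _]mxE -!rmorphXn -rmorphM -rmorphD fmorph_eq0 pt0 pt1.
    have Xp : 0 < X by rewrite mulr_gt0.
    have h1 : 0 < X ^+ 4 by rewrite exprn_gt0.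
    have h2 : 0 <= d ^+ 2 * Y ^+ 4 by rewrite mulr_ge0 // exprn_ge0 // ltW.
    apply: lt0r_neq0; lra.
  have h02 : PA 0 c0 ^+ 4 - ratr d ^+ 2 * PA 0 c2 ^+ 4 != 0.
    rewrite ![PA _ _]mxE -!rmorphXn -rmorphM -rmorphB fmorph_eq0 pt0 pt2.
    have -> : X ^+ 4 - d ^+ 2 * Z ^+ 4 = d ^+ 2 * ((P ^+ 2 * d) ^+ 2 - (Z ^+ 2) ^+ 2)
      by rewrite /X; ring.
    have q0 : 0 < P ^+ 2 * d by rewrite mulr_gt0 // exprn_gt0.
    have k2 : (P ^+ 2 * d) ^+ 2 < (Z ^+ 2) ^+ 2 by nra.
    by rewrite mulf_neq0 ?expf_neq0 ?(lt0r_neq0 d0) // subr_eq0 lt_eqF.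

  have h03 : PA 0 c0 ^+ 4 - PA 0 c3 ^+ 4 != 0.
    rewrite ![PA _ _]mxE -!rmorphXn -rmorphB fmorph_eq0 pt0 pt3.
    have -> : X ^+ 4 - W ^+ 4 = d ^+ 4 * (P ^+ 4 - 1) by rewrite /X /W; ring.
    have q25 : 25%:R <= P ^+ 2 by nra.
    have q1 : 1 < P ^+ 4 by nra.
    by rewrite mulf_neq0 ?expf_neq0 ?(lt0r_neq0 d0) // subr_eq0 gt_eqF.

  have lin : forall (a1 b1 a2 b2 : algC),
      a1 *: u + b1 *: v = a2 *: u + b2 *: v -> a1 = a2 /\ b1 = b2.
    move=> a1 b1 a2 b2 e.
    have := ind (a1 - a2) (b1 - b2).
    case; first by rewrite !scalerBl addrACA -opprD e subrr.
    by move=> /eqP; rewrite subr_eq0 => /eqP -> /eqP; rewrite subr_eq0 => /eqP ->.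
  case: (eqVneq s 0) => hs.
  -
    have Et : PA = t *: v by rewrite /PA E hs scale0r add0r.
    apply: (@no_line (ratr d) PA u) => //.
      move=> a0 b0.
      have -> : a0 *: PA + b0 *: u = b0 *: u + (a0 * t) *: v.
        by apply: row_ext; rewrite Et !mxE; ring.
      exact: Fl.
    move=> a0 b0 e.
    have e' : b0 *: u + (a0 * t) *: v = 0 *: u + 0 *: v.
      rewrite !scale0r addr0 -e; apply: row_ext; rewrite Et !mxE; ring.
    case: (lin _ _ _ _ e') => -> /eqP; rewrite mulf_eq0 => /orP[/eqP -> //|/eqP t0].
    by move: PA0; rewrite Et t0 scale0r mxE eqxx.

  - apply: (@no_line (ratr d) PA v) => //.
      move=> a0 b0.
      have -> : a0 *: PA + b0 *: v = (a0 * s) *: u + (a0 * t + b0) *: v.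
        by apply: row_ext; rewrite /PA E !mxE; ring.
      exact: Fl.
    move=> a0 b0 e.
    have e' : (a0 * s) *: u + (a0 * t + b0) *: v = 0 *: u + 0 *: v.
      rewrite !scale0r addr0 -e; apply: row_ext; rewrite /PA E !mxE; ring.
    case: (lin _ _ _ _ e') => /eqP; rewrite mulf_eq0 (negPf hs) orbF => /eqP a00.
    by rewrite a00 mul0r add0r.
move=> j [q Hq].
set A := numq (a j); set B := denq (a j); set n := numq q; set m := denq q.
have B0 : (B%:~R : rat) != 0 by rewrite intr_eq0 denq_neq0.
have m0 : (m%:~R : rat) != 0 by rewrite intr_eq0 denq_neq0.
have Eq : d * A%:~R * m%:~R ^+ 2 = n%:~R ^+ 2 * B%:~R.
  rewrite -[a j]divq_num_den -[q]divq_num_den -/A -/B -/n -/m in Hq.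
  transitivity (d * (A%:~R / B%:~R) * B%:~R * m%:~R ^+ 2); first by field.
  by rewrite Hq; field.
have Ed : (((p * (4 * (p ^ 4 + 1)))%N)%:Z%:~R : rat) = d.
  rewrite /d /P -[LHS]/(((p * (4 * (p ^ 4 + 1)))%N)%:R : rat).
  by rewrite !natrM natrD natrX; ring.
have Ez : ((p * (4 * (p ^ 4 + 1)))%N%:Z * A * m ^+ 2 = n ^+ 2 * B)%R.
  apply: (@intr_inj rat); rewrite !rmorphM /=.
  have -> : (n%:~R * n%:~R * B%:~R : rat) = n%:~R ^+ 2 * B%:~R by ring.
  rewrite -Eq -Ed !rmorphM /=; ring.
have En := congr1 absz Ez; rewrite !abszM /= in En.
have En2 : (p * (4 * (p ^ 4 + 1)) * `|A| * `|m| ^ 2 = `|n| ^ 2 * `|B|)%N.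
  transitivity (p * (4 * (p ^ 4 + 1)) * `|A| * (`|m| * `|m|))%N; first by ring.
  by rewrite En; ring.
have [bA bB] := bnd j.
apply: (@nat_part p `|A| `|m| `|n| `|B| pp p4 _ _ _ En2).
- by rewrite absz_gt0 numq_eq0 ha bA.
- by rewrite absz_gt0 denq_neq0 bB.
- exact: coprime_num_den.
Qed.
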